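(* Let $T$ be a tree with $n\ge 3$ vertices, and let $\delta'$ be the minimum degree of an internal vertex of $T$ (a vertex of degree greater than $1$). Then $$av_1(T)\le 2+\frac{n-\delta'-1}{2}.$$
   Context: For a graph $G=(V,E)$, a set $S\subseteq V$ is a $1$-nearly independent vertex set if the subgraph induced by $S$ has exactly one edge. $\sigma_1(G)$ is the number of such sets, $S_1(G)$ the sum of their sizes, and $av_1(G)=S_1(G)/\sigma_1(G)$. *)

(* Defs.v *)
From mathcomp Require Import all_boot all_order all_algebra.
Set Implicit Arguments. Unset Strict Implicit. Unset Printing Implicit Defensive.
Import Order.TTheory GRing.Theory Num.Theory.

Section Graphs.
Variables (T : finType) (e : rel T).

Definition simple_graph := symmetric e /\ irreflexive e.

Definition connected_graph := forall x y : T, connect e x y.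

Definition acyclic_graph :=
  forall p : seq T, 3 <= size p -> uniq p -> ~~ cycle e p.

Definition is_tree := [/\ simple_graph, connected_graph & acyclic_graph].

Definition deg (x : T) : nat := #|[set y | e x y]|.

Definition min_internal_deg : nat :=
  \big[minn/#|T|]_(v : T | 1 < deg v) deg v.

Definition induced_edges (S : {set T}) : nat :=
  #|[set [set x; y] | x in S, y in S & e x y]|.

Definition near_indep1 (S : {set T}) : bool := induced_edges S == 1.

Definition sigma1 : nat := #|[set S : {set T} | near_indep1 S]|.
Definition Ssum1 : nat := \sum_(S : {set T} | near_indep1 S) #|S|.
Definition av1 : rat := (Ssum1%:R / sigma1%:R)%R.

End Graphs.

(* Main.v *)
Require Import Defs.
From mathcomp Require Import all_boot all_order all_algebra.
Import Order.TTheory GRing.Theory Num.Theory.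
From mathcomp Require Import zify.
From mathcomp Require Import lra.
Set Implicit Arguments. Unset Strict Implicit. Unset Printing Implicit Defensive.

Definition W (T : finType) (e : rel T) (S : {set T}) (a b : T) :=
  [/\ a \in S, b \in S, e a b &
   forall y z, y \in S -> z \in S -> e y z -> [set y; z] = [set a; b]].

Lemma ni_W (T : finType) (e : rel T) (S : {set T}) :
  near_indep1 e S -> exists a b, W e S a b.
Proof.
rewrite /near_indep1 /induced_edges => /cards1P [E0 HE].
have : E0 \in [set [set x; y] | x in S, y in S & e x y] by rewrite HE set11.
case/imset2P => a b aS; rewrite inE => /andP [bS eab] E0eq; subst E0.
exists a, b; split => // y z yS zS eyz.
have : [set y; z] \in [set [set x; y] | x in S, y in S & e x y].
  by apply/imset2P; exists y z => //; rewrite inE zS.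
by rewrite HE => /set1P.
Qed.

Lemma W_ni (T : finType) (e : rel T) (S : {set T}) a b :
  W e S a b -> near_indep1 e S.
Proof.
case=> aS bS eab H; rewrite /near_indep1 /induced_edges; apply/cards1P.
exists [set a; b]; apply/setP => E; rewrite inE; apply/imset2P/eqP.
  by case=> y z yS; rewrite inE => /andP [zS eyz] ->; apply: H.
by move=> ->; exists a b => //; rewrite inE bS.
Qed.
Definition Free (T : finType) (e : rel T) (S : {set T}) : {set T} :=
  [set x | [forall y in S, forall z in S, e y z ==> ~~ e x y]].

Lemma W_sym (T : finType) (e : rel T) S a b :
  symmetric e -> W e S a b -> W e S b a.
Proof.
move=> sy [aS bS eab H]; split => //; first by rewrite sy.
by move=> y z yS zS eyz; rewrite [RHS]setUC; apply: H.
Qed.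

Lemma W_Free (T : finType) (e : rel T) S a b :
  symmetric e -> W e S a b -> Free e S = [set x | ~~ e x a && ~~ e x b].
Proof.
move=> sy [aS bS eab H]; apply/setP => x; rewrite !inE.
apply/forallP/andP.
  move=> Hf; split.
    by have := Hf a; rewrite aS /= => /forallP /(_ b); rewrite bS eab.
  by have := Hf b; rewrite bS /= => /forallP /(_ a); rewrite aS sy eab.
case=> nxa nxb y; apply/implyP => yS; apply/forallP => z; apply/implyP => zS.
apply/implyP => eyz.
have : y \in [set y; z] by rewrite !inE eqxx.
by rewrite (H y z) // !inE => /orP [] /eqP ->.
Qed.

Lemma W_rest (T : finType) (e : rel T) S a b :
  symmetric e -> W e S a b -> S :\: Free e S = [set a; b].
Proof.
move=> sy HW; rewrite (W_Free sy HW); case: HW => aS bS eab H.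
apply/setP => x; rewrite !inE negb_and !negbK.
apply/andP/orP.
  case=> /orP [] exy xS.
    have : x \in [set x; a] by rewrite !inE eqxx.
    by rewrite (H x a) // !inE => /orP.
  have : x \in [set x; b] by rewrite !inE eqxx.
  by rewrite (H x b) // !inE => /orP.
case=> /eqP ->; split => //.
  by rewrite eab orbT.
by rewrite sy eab.
Qed.

Lemma W_del (T : finType) (e : rel T) S a b x :
  symmetric e -> W e S a b -> x \in S -> x \in Free e S -> W e (S :\ x) a b.
Proof.
move=> sy HW xS; rewrite (W_Free sy HW) inE => /andP [nxa nxb].
case: HW => aS bS eab H.
have xa : a != x by apply/eqP => ax; move: nxb; rewrite -ax eab.
have xb : b != x by apply/eqP => bx; move: nxa; rewrite -bx sy eab.
split => //; rewrite ?inE ?xa ?xb //.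
move=> y z; rewrite !inE => /andP [_ yS] /andP [_ zS]; exact: H.
Qed.
Lemma mid_le (T : finType) (e : rel T) v :
  1 < deg e v -> min_internal_deg e <= deg e v.
Proof.
move=> Hv; rewrite /min_internal_deg.
elim: (index_enum T) (mem_index_enum v) => [//|i r IH].
rewrite big_cons inE => /orP [/eqP <-|vr].
  by rewrite Hv geq_minl.
case: ifP => _; last exact: IH.
by apply: leq_trans (geq_minr _ _) _; apply: IH.
Qed.

Lemma mid_card (T : finType) (e : rel T) : min_internal_deg e <= #|T|.
Proof.
rewrite /min_internal_deg; apply: (big_ind (fun x => x <= #|T|)) => //.
  by move=> x y Hx _; apply: leq_trans (geq_minl _ _) Hx.
by move=> i _; apply: max_card.
Qed.

Lemma edge_internal (T : finType) (e : rel T) a b :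
  symmetric e -> connected_graph e -> 3 <= #|T| -> e a b ->
  1 < deg e a \/ 1 < deg e b.
Proof.
move=> sy co n3 eab.
case: (leqP (deg e a) 1) => Ha; last by left.
case: (leqP (deg e b) 1) => Hb; last by right.
exfalso.
have Na : forall y, e a y -> y = b.
  move=> y eay; move/card_le1P: Ha => /(_ b); rewrite inE eab => /(_ isT y).
  by rewrite inE eay => /esym /eqP.
have Nb : forall y, e b y -> y = a.
  move=> y eby; move/card_le1P: Hb => /(_ a); rewrite inE -sy eab => /(_ isT y).
  by rewrite inE eby => /esym /eqP.
have : 0 < #|~: [set a; b]|.
  have := cardsC [set a; b]; rewrite cards2 => Hc.
  by case: (a != b) Hc => Hc; lia.
rewrite card_gt0 => /set0Pn [x]; rewrite inE => xn.
have Hp : forall c p, c \in [set a; b] -> path e c p -> last c p \in [set a; b].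
  move=> c p; elim: p c => [//|d p IH] c cin /= /andP [ecd pd].
  apply: IH pd; move: cin; rewrite !inE => /orP [] /eqP cE; subst c.
    by rewrite (Na d ecd) eqxx orbT.
  by rewrite (Nb d ecd) eqxx.
case/connectP: (co a x) => p pp xE.
by move: xn; rewrite xE Hp // !inE eqxx.
Qed.
Lemma Free_card0 (T : finType) (e : rel T) S a b :
  symmetric e -> irreflexive e -> 1 < deg e a -> W e S a b ->
  #|Free e S| + min_internal_deg e + 1 <= #|T|.
Proof.
move=> sy ir Ha HW; rewrite (W_Free sy HW); case: HW => aS bS eab _.
set F := [set x | _].
have sub : a |: [set y | e a y] \subset ~: F.
  apply/subsetP => x; rewrite /F !inE => /orP [/eqP ->|eax].
    by rewrite eab andbF.
  by rewrite sy eax.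
have c1 := subset_leq_card sub.
rewrite cardsU1 inE ir /= in c1.
have := cardsC F; have := mid_le Ha; rewrite /deg in c1 *; lia.
Qed.

Lemma Free_card (T : finType) (e : rel T) S a b :
  is_tree e -> 3 <= #|T| -> W e S a b ->
  #|Free e S| + min_internal_deg e + 1 <= #|T|.
Proof.
case=> [[sy ir] co _] n3 HW.
case: (edge_internal sy co n3 (let: And4 _ _ h _ := HW in h)) => H.
  exact: Free_card0 H HW.
exact: Free_card0 H (W_sym sy HW).
Qed.
Lemma card_sum (T : finType) (A : {set T}) : #|A| = \sum_x (x \in A : nat).
Proof. by rewrite -sum1_card big_mkcond; apply: eq_bigr => x _; case: (x \in A). Qed.

Lemma sum_card (I : finType) (P Q : pred I) :
  \sum_(i | P i) (Q i : nat) = #|[set i | P i && Q i]|.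
Proof.
rewrite -sum1_card [RHS](eq_bigl (fun i => P i && Q i)); last by move=> i; rewrite inE.
by rewrite big_mkcondr; apply: eq_bigr => i _; case: (Q i).
Qed.

Lemma count_ab (T : finType) (e : rel T) : symmetric e ->
  \sum_(S | near_indep1 e S) #|S :&: Free e S| <=
  \sum_(S | near_indep1 e S) #|Free e S :\: S|.
Proof.
move=> sy.
under eq_bigr do rewrite card_sum.
under [X in _ <= X]eq_bigr do rewrite card_sum.
rewrite exchange_big [X in _ <= X]exchange_big /=; apply: leq_sum => x _.
rewrite !sum_card.
set A := [set S | _ && _]; set B := [set S | _ && _].
rewrite -(@card_in_imset _ _ (fun S => S :\ x) A).
  apply: subset_leq_card; apply/subsetP => S' /imsetP [S]; rewrite inE.
  move=> /andP [niS]; rewrite inE => /andP [xS xF] ->.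
  case: (ni_W niS) => a [b HW].
  have HW' := W_del sy HW xS xF.
  rewrite inE (W_ni HW') /= inE (W_Free sy HW') -(W_Free sy HW) xF.
  by rewrite setD11.
move=> S1 S2; rewrite !inE => /andP [_ /andP [x1 _]] /andP [_ /andP [x2 _]] E.
by rewrite -(setD1K x1) E setD1K.
Qed.
Lemma sum_const_ni (T : finType) (e : rel T) c :
  \sum_(S | near_indep1 e S) c = sigma1 e * c.
Proof. by rewrite /sigma1 -sum_nat_const; apply: eq_bigl => S; rewrite inE. Qed.

Lemma key_nat (T : finType) (e : rel T) :
  is_tree e -> 3 <= #|T| ->
  2 * Ssum1 e + sigma1 e * (min_internal_deg e + 1) <= sigma1 e * (4 + #|T|).
Proof.
move=> tr n3; have [[sy ir] _ _] := tr.
set d := min_internal_deg e.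
have HS : forall S, near_indep1 e S ->
   #|S| = 2 + #|S :&: Free e S| /\
   #|S :&: Free e S| + #|Free e S :\: S| + d + 1 <= #|T|.
  move=> S niS; case: (ni_W niS) => a [b HW]; split.
    rewrite -(cardsID (Free e S) S) (W_rest sy HW) cards2.
    case: (HW) => _ _ eab _.
    have -> : a != b by apply/eqP => ab; move: eab; rewrite ab ir.
    by rewrite addnC.
  have := Free_card tr n3 HW; have := cardsID S (Free e S); rewrite setIC; lia.
rewrite /Ssum1 big_distrr /= -!sum_const_ni -big_split /=.
apply: (@leq_trans (\sum_(S | near_indep1 e S)
   ((4 + #|S :&: Free e S| + (d + 1)) + #|Free e S :\: S|))).
  rewrite (eq_bigr (fun S => (4 + #|S :&: Free e S| + (d + 1)) + #|S :&: Free e S|)).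
    by rewrite !big_split /= leq_add2l count_ab.
  by move=> S niS; have [-> _] := HS S niS; lia.
have E : forall x y z n, x + y + z + 1 <= n -> 4 + x + (z+1) + y <= 4 + n by lia.
by apply: leq_sum => S niS; have [_ H] := HS S niS; apply: E.
Qed.
Theorem mainTheorem10 (T : finType) (e : rel T) :
  is_tree e -> 3 <= #|T| ->
  (av1 e <= 2 + ((#|T|%:R - (min_internal_deg e)%:R - 1) / 2 : rat))%R.
Proof.
move=> tr n3; have K := key_nat tr n3; have Hd := mid_card e.
rewrite /av1; move: K Hd.
move: (sigma1 e) (Ssum1 e) (min_internal_deg e) #|T| => s m d n K Hd.
have Hd' : (d%:R <= n%:R :> rat)%R by rewrite ler_nat.
case: (posnP s) => [s0 | spos].
  rewrite s0 invr0 mulr0; lra.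
rewrite ler_pdivrMr ?ltr0n //.
have K' : ((2 * m + s * (d + 1))%:R <= (s * (4 + n))%:R :> rat)%R by rewrite ler_nat.
move: K'; rewrite !natrD !natrM => K'.
nra.
Qed.
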